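(* Let $\pi:(X,T)\to(Z,R)$ be a factor map between dynamical systems. (1) If $\pi$ is almost one-to-one and $(Z,R)$ is transitively sensitive (with some sensitive constant $\delta>0$), then $(X,T)$ is transitively sensitive. (2) If there exists $z\in Z$ with $\pi^{-1}(z)$ a singleton and $(X,T)$ is transitively sensitive, then $(Z,R)$ is sensitive; in particular $\mathrm{Eq}(Z,R)=\varnothing$.
   Context: A dynamical system $(X,T)$: $X$ is a compact metric space (metric $d$) with more than one point and without isolated points, $T:X\to X$ a continuous surjection. A factor map $\pi:(X,T)\to(Z,R)$ is a continuous surjection $\pi:X\to Z$ with $\pi\circ T=R\circ\pi$. $\pi$ is almost one-to-one if the set of $x\in X$ with $\pi^{-1}(\pi(x))=\{x\}$ is dense in $X$. ''Opene'' means open and nonempty. $S_T(U,\delta)=\{n\in\mathbb{Z}_+:\exists x_1,x_2\in U,\ d(T^nx_1,T^nx_2)>\delta\}$, $N_T(U,V)=\{n\in\mathbb{Z}_+:U\cap T^{-n}V\neq\varnothing\}$. $(X,T)$ is transitively sensitive (with sensitive constant $\delta$) if $S_T(W,\delta)\cap N_T(U,V)\neq\varnothing$ for all opene $U,V,W$. $(Z,R)$ is sensitive if there is $\delta>0$ such that for every $z\in Z$ and neighbourhood $U$ of $z$ there exist $y\in U$, $n\in\mathbb{N}$ with $\rho(R^nz,R^ny)>\delta$ ($\rho$ the metric of $Z$). $\mathrm{Eq}(Z,R)$ is the set of equicontinuity points: $z$ such that for every $\varepsilon>0$ there is $\eta>0$ with $\rho(z,z')<\eta\Rightarrow\rho(R^nz,R^nz')<\varepsilon$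 for all $n\in\mathbb{Z}_+$. *)

(* Defs.v *)
From HB Require Import structures.
From mathcomp Require Import all_boot all_order all_algebra.
From mathcomp Require Import all_classical all_reals all_analysis.
Set Implicit Arguments. Unset Strict Implicit. Unset Printing Implicit Defensive.
Import Order.TTheory GRing.Theory Num.Theory.
Local Open Scope classical_set_scope.
Local Open Scope ring_scope.

Definition dynamical_system {R : realType} (X : metricType R) (T : X -> X) : Prop :=
  [/\ compact [set: X],
      (exists x y : X, x <> y),
      (forall x : X, ~ open [set x]),
      continuous T
    & (forall y : X, exists x : X, T x = y)].

Definition factor_map {R : realType} (X Z : metricType R) (T : X -> X) (S : Z -> Z)
  (pi : X -> Z) : Prop :=
  [/\ continuous pi, (forall z : Z, exists x : X, pi x = z)
    & (forall x : X, pi (T x) = S (pi x))].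

Definition almost_one_to_one {R : realType} (X Z : metricType R) (pi : X -> Z) : Prop :=
  dense [set x : X | pi @^-1` [set pi x] = [set x]].

Definition opene {R : realType} (X : metricType R) (U : set X) : Prop :=
  open U /\ U !=set0.

(* S_T(U, delta), n ranging over Z_+ = nat (including 0) *)
Definition S_T {R : realType} (X : metricType R) (T : X -> X) (U : set X) (delta : R)
  : set nat :=
  [set n | exists x1 x2 : X, [/\ U x1, U x2 & mdist (iter n T x1) (iter n T x2) > delta]].

Definition N_T {R : realType} (X : metricType R) (T : X -> X) (U V : set X) : set nat :=
  [set n | (U `&` (iter n T) @^-1` V) !=set0].

Definition transitively_sensitive_with {R : realType} (X : metricType R) (T : X -> X)
  (delta : R) : Prop :=
  0 < delta /\
  forall U V W : set X, opene U -> opene V -> opene W ->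
    (S_T T W delta `&` N_T T U V) !=set0.

Definition transitively_sensitive {R : realType} (X : metricType R) (T : X -> X) : Prop :=
  exists delta : R, transitively_sensitive_with T delta.

Definition sensitive {R : realType} (Z : metricType R) (S : Z -> Z) : Prop :=
  exists delta : R, 0 < delta /\
    forall (z : Z) (U : set Z), nbhs z U ->
      exists (y : Z) (n : nat), [/\ U y, (0 < n)%N & mdist (iter n S z) (iter n S y) > delta].

Definition Eq_points {R : realType} (Z : metricType R) (S : Z -> Z) : set Z :=
  [set z | forall eps : R, 0 < eps -> exists2 eta : R, 0 < eta &
     forall z' : Z, mdist z z' < eta -> forall n : nat, mdist (iter n S z) (iter n S z') < eps].

(* Main.v *)
Require Import Defs.
From HB Require Import structures.
From mathcomp Require Import all_boot all_order all_algebra.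
From mathcomp Require Import all_classical all_reals all_analysis.
From mathcomp Require Import lra.
Import Order.TTheory GRing.Theory Num.Theory.
Local Open Scope classical_set_scope.
Local Open Scope ring_scope.
Import metricType_numDomainType.
Set Implicit Arguments.

Lemma cont_mdist (R : realType) (X Z : metricType R) (pi : X -> Z) (x : X) (e : R) :
  continuous pi -> 0 < e -> exists2 r : R, 0 < r & forall y, mdist x y < r -> mdist (pi x) (pi y) < e.
Proof.
move=> pic e0.
have := cvgr_dist_lt (pic x) e0.
move=> /(_ _)/nbhs_mdistP[r /= r0 Hr]; exists r => // y xy; exact: Hr.
Qed.

Lemma unif_cont (R : realType) (X Z : metricType R) (pi : X -> Z) (e : R) :
  compact [set: X] -> continuous pi -> 0 < e ->
  exists2 d : R, 0 < d & forall a b, mdist a b < d -> mdist (pi a) (pi b) < e.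
Proof.
move=> cpt pic e0.
have H : \forall d \near (0:R)^'+, [set: X] `<=`
    (fun a => forall b, mdist a b < d -> mdist (pi a) (pi b) < e).
  move: cpt => /compact_near_coveringP; apply => x _.
  have [r r0 Hr] := @cont_mdist R X Z pi x (e/2) pic (divr_gt0 e0 (ltr0n _ 2)).
  exists (ball x (r/2), [set i | i < r/2]); first split.
  + exact: nbhsx_ballx (divr_gt0 r0 (ltr0n _ 2)).
  + exact: nbhs_right_lt (divr_gt0 r0 (ltr0n _ 2)).
  move=> [x' i] [/= bx' ir] b x'b.
  rewrite -ball_mdistE /= in bx'.
  have h1 : mdist (pi x) (pi x') < e/2 by apply: Hr; lra.
  have h2 : mdist x b < r.
    apply: le_lt_trans (metric_triangle x x' b) _; lra.
  have h3 := Hr _ h2.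
  apply: le_lt_trans (metric_triangle _ (pi x) _) _.
  rewrite metric_sym; lra.
have [d [d0 Hd]] := filter_ex (filterI (nbhs_right_gt 0) H).
by exists d => // a b; apply: Hd.
Qed.

Lemma fiber_open (R : realType) (X Z : metricType R) (pi : X -> Z) (z : Z) (W : set X) :
  compact [set: X] -> continuous pi -> open W -> pi @^-1` [set z] `<=` W ->
  exists O : set Z, [/\ open O, O z & pi @^-1` O `<=` W].
Proof.
move=> cpt pic oW sub.
exists (~` (pi @` ~` W)); split.
- rewrite openC; apply: compact_closed; first exact: metric_hausdorff.
  apply: continuous_compact; first exact: continuous_subspaceT.
  apply: subclosed_compact cpt (subsetT _).
  by rewrite closedC.
- by move=> [x nWx pxz]; apply: nWx; apply: sub.
- move=> x /= H; apply: contrapT => nWx; apply: H; by exists x.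
Qed.

Lemma iter_comm (X Z : Type) (T : X -> X) (S : Z -> Z) (pi : X -> Z) :
  (forall x, pi (T x) = S (pi x)) -> forall n x, pi (iter n T x) = iter n S (pi x).
Proof. by move=> H; elim=> [|n IH] x //=; rewrite H IH. Qed.

Lemma mball_nbhs (R : realType) (Z : metricType R) (z : Z) (c : R) :
  0 < c -> nbhs z [set y | mdist z y < c].
Proof. by move=> c0; apply/nbhs_mdistP; exists c. Qed.

Lemma open_mball (R : realType) (Z : metricType R) (O : set Z) (z : Z) :
  open O -> O z -> exists2 r : R, 0 < r & forall y, mdist z y < r -> O y.
Proof.
move=> oO Oz; have : nbhs z O by apply: open_nbhs_nbhs; split.
by move/nbhs_mdistP => [r /= r0 Hr]; exists r.
Qed.

Lemma part1 (R : realType) (X Z : metricType R) (T : X -> X) (S : Z -> Z)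
  (pi : X -> Z) :
  dynamical_system T -> dynamical_system S -> factor_map T S pi ->
  almost_one_to_one pi ->
      (exists delta : R, transitively_sensitive_with S delta) ->
      transitively_sensitive T.
Proof.
move=> [cptX _ _ Tc Ts] [cptZ _ _ Sc Ss] [pic pis pcomm].
move=> a11 [del [del0 Hz]].
have [d d0 Hd] := @unif_cont R X Z pi del cptX pic del0.
have IC := @iter_comm _ _ T S pi pcomm.
exists (d/2); split; first by rewrite divr_gt0.
have lift : forall A, opene A -> exists O, opene O /\ pi @^-1` O `<=` A.
  move=> A [oA [a Aa]].
  have [u [Au Su]] := a11 A (ex_intro _ a Aa) oA.
  have [Q [oO Ou sub]] : exists Q : set Z, [/\ open Q, Q (pi u) & pi @^-1` Q `<=` A].
    apply: fiber_open => //.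
    by rewrite /= in Su; rewrite Su => y ->.
  by exists Q; split => //; split => //; exists (pi u).
move=> U V W oU oV oW.
have [OU [oOU sU]] := lift U oU.
have [OV [oOV sV]] := lift V oV.
have [OW [oOW sW]] := lift W oW.
have [n [[z1 [z2 [Wz1 Wz2 dz]]] [u [Uu Vnu]]]] := Hz OU OV OW oOU oOV oOW.
exists n; split.
- have [x1 px1] := pis z1; have [x2 px2] := pis z2.
  exists x1, x2; split.
  + by apply: sW; rewrite /= px1.
  + by apply: sW; rewrite /= px2.
  rewrite ltNge; apply/negP => h.
  have := Hd (iter n T x1) (iter n T x2) ltac:(lra).
  rewrite !IC px1 px2; lra.
- have [x px] := pis u.
  exists x; split.
  + by apply: sU; rewrite /= px.
  + by apply: sV; rewrite /= IC px.
Qed.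

Lemma part2 (R : realType) (X Z : metricType R) (T : X -> X) (S : Z -> Z)
  (pi : X -> Z) :
  dynamical_system T -> dynamical_system S -> factor_map T S pi ->
   ((exists (z : Z) (x : X), pi @^-1` [set z] = [set x]) ->
      transitively_sensitive T ->
      sensitive S).
Proof.
move=> [cptX _ _ Tc Ts] [cptZ _ _ Sc Ss] [pic pis pcomm].
move=> [z0 [x0 fib]] [del [del0 HT]].
have IC := @iter_comm _ _ T S pi pcomm.
have px0 : pi x0 = z0.
  have : (pi @^-1` [set z0]) x0 by rewrite fib.
  by [].
have [Q [oQ Qz0 sQ]] : exists Q : set Z,
    [/\ open Q, Q z0 & pi @^-1` Q `<=` (ball x0 (del/2))°].
  apply: fiber_open => //; first exact: open_interior.
  rewrite fib => y ->; apply: nbhsx_ballx; by rewrite divr_gt0.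
have [r r0 Hr] := @open_mball R Z Q z0 oQ Qz0.
exists (r/8); split; first by rewrite divr_gt0.
move=> z U nU.
pose U' := U `&` [set y | mdist z y < r/4].
have nU' : nbhs z U'.
  by apply: filterI => //; apply: mball_nbhs; rewrite divr_gt0.
pose WX := (pi @^-1` U')°.
pose VX := (pi @^-1` [set y | mdist z0 y < r/2])°.
have oWX : opene WX.
  split; first exact: open_interior.
  have [x px] := pis z; exists x; rewrite /WX /interior /=.
  apply: (pic x); by rewrite px.
have oVX : opene VX.
  split; first exact: open_interior.
  exists x0; rewrite /VX /interior /=.
  apply: (pic x0); rewrite px0.
  by apply: mball_nbhs; rewrite divr_gt0.
have [n [[x1 [x2 [Wx1 Wx2 dx]]] [x [Wx Vnx]]]] := HT WX VX WX oWX oVX oWX.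
have {}Vnx : mdist z0 (iter n S (pi x)) < r/2.
  by have := interior_subset Vnx; rewrite /= IC.
have {}Wx : U' (pi x) by have := interior_subset Wx.
have key : forall a, WX a -> ~ ball x0 (del/2) (iter n T a) ->
  exists (y : Z) (n : nat), [/\ U y, (0 < n)%N & mdist (iter n S z) (iter n S y) > r/8].
  move=> a Wa nb.
  have {}Wa : U' (pi a) by have := interior_subset Wa.
  have nQ : ~ Q (iter n S (pi a)).
    by rewrite -IC => /sQ /interior_subset.
  have ra : r <= mdist z0 (iter n S (pi a)).
    by rewrite leNgt; apply/negP => /Hr.
  have hxa : r/2 < mdist (iter n S (pi x)) (iter n S (pi a)).
    have := metric_triangle z0 (iter n S (pi x)) (iter n S (pi a)); lra.
  clear dx nb; case: n hxa {Vnx nQ ra} => [|n] hxa.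
    case: Wx Wa => _ /= h1 [_ /= h2]; move: hxa => /=.
    have := metric_triangle (pi x) z (pi a); rewrite (metric_sym (pi x) z); lra.
  have [h|h] := leP (mdist (iter n.+1 S z) (iter n.+1 S (pi x))) (r/8).
  - exists (pi a), n.+1; split => //; first by case: Wa.
    have := metric_triangle (iter n.+1 S (pi x)) (iter n.+1 S z) (iter n.+1 S (pi a)); rewrite (metric_sym (iter n.+1 S (pi x)) (iter n.+1 S z)); lra.
  - exists (pi x), n.+1; split => //; by case: Wx.
have [b1|nb1] := pselect (ball x0 (del/2) (iter n T x1)); last exact: key x1 Wx1 nb1.
apply: (key x2 Wx2) => b2.
move: b1 b2; rewrite -ball_mdistE /= => b1 b2.
have := metric_triangle (iter n T x1) x0 (iter n T x2); rewrite (metric_sym (iter n T x1) x0); lra.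
Qed.

Theorem lemma4p4 (R : realType) (X Z : metricType R) (T : X -> X) (S : Z -> Z)
  (pi : X -> Z) :
  dynamical_system T -> dynamical_system S -> factor_map T S pi ->
  ((almost_one_to_one pi ->
      (exists delta : R, transitively_sensitive_with S delta) ->
      transitively_sensitive T)
   /\
   ((exists (z : Z) (x : X), pi @^-1` [set z] = [set x]) ->
      transitively_sensitive T ->
      sensitive S /\ Eq_points S = set0)).
Proof.
move=> dT dS fm; split; first exact: part1.
move=> H1 H2; have sS := part2 dT dS fm H1 H2; split => //.
case: sS => d [d0 Hs].
apply/seteqP; split => [z /= Hz|//].
have [eta eta0 H] := Hz d d0.
have [y [n [Uy _ dn]]] := Hs z _ (@mball_nbhs R Z z eta eta0).
have := H y Uy n; lra.
Qed.
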